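(* Let $q\in\mathbb{C}$ with $|q|<1$, $r\in\mathbb{N}$, $w_1,\dots,w_r>0$, $a_1,\dots,a_r\in\mathbb{C}$, $x\in\mathbb{C}$ with $\Re(x)>0$, and let $\chi$ be a Dirichlet character with conductor $f\in\mathbb{N}$, $f$ odd. Define $E_{n,\chi,q}^{(r)}(x|w_1,\dots,w_r;a_1,\dots,a_r)$ by $$2^r\sum_{m_1,\dots,m_r=0}^{\infty}\Big(\prod_{j=1}^r\chi(m_j)\Big)(-1)^{m_1+\cdots+m_r}q^{a_1m_1+\cdots+a_rm_r}e^{[x+\sum_{j=1}^r w_jm_j]_q t}=\sum_{n=0}^{\infty}E_{n,\chi,q}^{(r)}(x|w_1,\dots,w_r;a_1,\dots,a_r)\frac{t^n}{n!},$$ and the Barnes-type multiple $q$-$l$-function by $$l_{q,\chi}^{(r)}(s,x|w_1,\dots,w_r;a_1,\dots,a_r)=2^r\sum_{m_1,\dots,m_r=0}^{\infty}\frac{\Big(\prod_{j=1}^r\chi(m_j)\Big)(-1)^{m_1+\cdots+m_r}q^{m_1a_1+\cdots+m_ra_r}}{[x+w_1m_1+\cdots+w_rm_r]_q^s},\quad s\in\mathbb{C}$$ (extended meromorphically to the whole $s$-plane). Then for every integer $n\ge 0$, $$l_{q,\chi}^{(r)}(-n,x|w_1,\dots,w_r;a_1,\dots,a_r)=E_{n,\chi,q}^{(r)}(x|w_1,\dots,w_r;a_1,\dots,a_r).$$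
   Context: For complex $q$ with $|q|<1$, $[y]_q=\frac{1-q^y}{1-q}$, and $[y]_q^{s}$ denotes a complex power of $[y]_q$. *)

(* Defs.v *)
From Stdlib Require Import Reals Lra Lia List.
From Coquelicot Require Import Coquelicot.
Open Scope R_scope.

Definition cexp (z : C) : C :=
  (exp (Re z) * cos (Im z), exp (Re z) * sin (Im z)).

(** Principal argument in (-PI, PI], with carg 0 = 0. *)
Definition carg (z : C) : R :=
  let a := Re z in let b := Im z in
  match Rlt_dec 0 a with
  | left _ => atan (b / a)
  | right _ =>
    match Rlt_dec a 0 with
    | left _ => match Rle_dec 0 b with
                | left _ => atan (b / a) + PI
                | right _ => atan (b / a) - PI
                end
    | right _ =>
      match Rlt_dec 0 b with
      | left _ => PI / 2
      | right _ => match Rlt_dec b 0 with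
                   | left _ => - (PI / 2)
                   | right _ => 0
                   end
      end
    end
  end.

Definition clog (z : C) : C := (ln (Cmod z), carg z).

(** Complex power z^s := exp(s Log z) (principal branch); for z = 0 we use
    0^0 = 1 and 0^s = 0 for s <> 0. *)
Definition cpow (z s : C) : C :=
  match Req_EM_T (Re z) 0, Req_EM_T (Im z) 0 with
  | left _, left _ =>
      match Req_EM_T (Re s) 0, Req_EM_T (Im s) 0 with
      | left _, left _ => 1%C
      | _, _ => 0%C
      end
  | _, _ => cexp (s * clog z)%C
  end.

Definition qint (q y : C) : C := ((1 - cpow q y) / (1 - q))%C.

Definition is_dirichlet_char (f : nat) (chi : nat -> C) : Prop :=
  (1 <= f)%nat /\
  (forall m, chi (m + f)%nat = chi m) /\
  (forall m n, chi (m * n)%nat = (chi m * chi n)%C) /\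
  chi 1%nat = 1%C /\
  (forall m, chi m = 0%C <-> Nat.gcd m f <> 1%nat).

(** chi is a Dirichlet character with conductor f, i.e. a primitive
    character modulo f: no proper divisor d of f is such that chi is
    trivial on the residues coprime to f that are congruent to 1 mod d. *)
Definition has_conductor (f : nat) (chi : nat -> C) : Prop :=
  is_dirichlet_char f chi /\
  forall d : nat, Nat.divide d f ->
    (forall m, Nat.gcd m f = 1%nat -> Nat.modulo m d = Nat.modulo 1 d -> chi m = 1%C) ->
    d = f.

(** Finite sums / products over j = 0 .. r-1 (indices of w_1..w_r etc.). *)
Definition csum (r : nat) (g : nat -> C) : C :=
  fold_right (fun j acc => (g j + acc)%C) 0%C (seq 0 r).
Definition cprod (r : nat) (g : nat -> C) : C :=
  fold_right (fun j acc => (g j * acc)%C) 1%C (seq 0 r).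
Definition nsum (r : nat) (m : nat -> nat) : nat :=
  fold_right (fun j acc => (m j + acc)%nat) 0%nat (seq 0 r).

(** Multi-indices (m_1,...,m_r) are encoded as m : nat -> nat with
    m_{j+1} = m j.  [cons_idx k m] prepends k. *)
Definition cons_idx (k : nat) (m : nat -> nat) : nat -> nat :=
  fun j => match j with O => k | S j' => m j' end.

(** [is_msum r F l]: the r-fold series sum_{m_1,...,m_r >= 0} F(m)
    converges (as an iterated series, m_1 outermost) with value l. *)
Fixpoint is_msum (r : nat) (F : (nat -> nat) -> C) (l : C) : Prop :=
  match r with
  | O => F (fun _ => O) = l
  | S r' => exists g : nat -> C,
      (forall k, is_msum r' (fun m => F (cons_idx k m)) (g k)) /\
      is_series g l
  end.

Definition coef (q : C) (chi : nat -> C) (r : nat) (a : nat -> C)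
  (m : nat -> nat) : C :=
  (RtoC (2 ^ r) * cprod r (fun j => chi (m j)) * RtoC ((-1) ^ nsum r m)
   * cpow q (csum r (fun j => a j * RtoC (INR (m j)))))%C.

Definition shift (x : C) (r : nat) (w : nat -> R) (m : nat -> nat) : C :=
  (x + csum r (fun j => RtoC (w j * INR (m j))))%C.

Definition gen_term (q : C) (chi : nat -> C) (r : nat) (w : nat -> R)
  (a : nat -> C) (x t : C) (m : nat -> nat) : C :=
  (coef q chi r a m * cexp (qint q (shift x r w m) * t))%C.

Definition l_term (q : C) (chi : nat -> C) (r : nat) (w : nat -> R)
  (a : nat -> C) (x s : C) (m : nat -> nat) : C :=
  (coef q chi r a m / cpow (qint q (shift x r w m)) s)%C.

(* Main.v *)
Require Import Defs.
From Stdlib Require Import Reals Lra Lia List Factorial ClassicalEpsilon.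
From Coquelicot Require Import Coquelicot.
Open Scope R_scope.

Lemma Re_sum_n (f : nat -> C) n : Re (sum_n f n) = sum_n (fun k => Re (f k)) n.
Proof. induction n; [rewrite !sum_O; auto | rewrite !sum_Sn, <- IHn; reflexivity]. Qed.
Lemma Im_sum_n (f : nat -> C) n : Im (sum_n f n) = sum_n (fun k => Im (f k)) n.
Proof. induction n; [rewrite !sum_O; auto | rewrite !sum_Sn, <- IHn; reflexivity]. Qed.

Lemma is_series_C (f : nat -> C) (l : C) :
  is_series f l <-> (is_series (fun n => Re (f n)) (Re l) /\ is_series (fun n => Im (f n)) (Im l)).
Proof.
  unfold is_series. split.
  - intros H. pose proof (proj1 (@filterlim_locally nat C_UniformSpace eventually _ (sum_n f) l) H) as H'.
    split; apply (proj2 (@filterlim_locally nat R_UniformSpace eventually _ _ _)); intros eps; specialize (H' eps); revert H'; apply filter_imp.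
    + intros n [H1 H2]. rewrite Re_sum_n in H1; exact H1.
    + intros n [H1 H2]. rewrite Im_sum_n in H2; exact H2.
  - intros [H1 H2]. apply (proj2 (@filterlim_locally nat C_UniformSpace eventually _ (sum_n f) l)).
    intros eps. pose proof (proj1 (@filterlim_locally nat R_UniformSpace eventually _ _ _) H1 eps) as H1e. pose proof (proj1 (@filterlim_locally nat R_UniformSpace eventually _ _ _) H2 eps) as H2e.
    generalize (filter_and _ _ H1e H2e). apply filter_imp. intros n [A B]. split.
    + rewrite Re_sum_n; exact A.
    + rewrite Im_sum_n; exact B.
Qed.
Lemma series_abs_le (b c : nat -> R) : (forall n, Rabs (b n) <= c n) -> ex_series c ->
  ex_series b /\ Rabs (Series b) <= Series c.
Proof.
  intros H Hc.
  assert (Ha : ex_series (fun n => Rabs (b n))).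
  { apply (@ex_series_le R_AbsRing R_CompleteNormedModule _ c); auto. intros n. change (Rabs (Rabs (b n)) <= c n). rewrite Rabs_Rabsolu. auto. }
  split. apply ex_series_Rabs; auto.
  eapply Rle_trans. apply Series_Rabs; auto.
  apply Series_le; auto. intros n; split; [apply Rabs_pos| auto].
Qed.

Lemma exR_scal_l (c : R) (a : nat -> R) : ex_series a -> ex_series (fun n => c * a n).
Proof. intros H. eapply ex_series_ext; [|apply (ex_series_scal_r c a H)]. intros; simpl; ring. Qed.

Lemma ex_series_sum_n (a : nat -> nat -> R) K : (forall k, ex_series (fun j => a j k)) ->
  ex_series (fun j => sum_n (fun k => a j k) K).
Proof.
  intros H. induction K.
  - eapply ex_series_ext; [|apply (H 0%nat)]. intros; simpl. rewrite sum_O; auto.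
  - eapply ex_series_ext; [|apply (ex_series_plus _ _ IHK (H (S K)))]. intros; simpl. rewrite sum_Sn; auto.
Qed.

Lemma is_series_lim (a : nat -> R) l : is_series a l <-> is_lim_seq (sum_n a) l.
Proof. reflexivity. Qed.

Lemma fubiniR (a : nat -> nat -> R) (u v : nat -> R) :
  (forall j k, Rabs (a j k) <= u j * v k) -> (forall j, 0 <= u j) -> (forall k, 0 <= v k) ->
  ex_series u -> ex_series v ->
  is_series (fun k => Series (fun j => a j k)) (Series (fun j => Series (fun k => a j k))).
Proof.
  intros Hb Hu Hv Eu Ev.
  assert (Ecol : forall k, ex_series (fun j => a j k)).
  { intros k. apply (series_abs_le _ (fun j => u j * v k)); auto.
    apply ex_series_scal_r; auto. }
  assert (Erow : forall j, ex_series (fun k => a j k)).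
  { intros j. apply (series_abs_le _ (fun k => u j * v k)); auto.
    apply exR_scal_l; auto. }
  set (T := Series (fun j => Series (fun k => a j k))).
  assert (F1 : forall K, sum_n (fun k => Series (fun j => a j k)) K = Series (fun j => sum_n (fun k => a j k) K)).
  { induction K.
    - rewrite sum_O. apply Series_ext. intros; rewrite sum_O; auto.
    - rewrite sum_Sn, IHK. simpl. unfold plus; simpl. rewrite <- Series_plus; auto.
      apply Series_ext. intros; rewrite sum_Sn; auto. apply ex_series_sum_n; auto. }
  set (V := fun K => Series (fun k => v (S K + k)%nat)).
  assert (F2 : forall j K, Series (fun k => a j k) - sum_n (fun k => a j k) K = Series (fun k => a j (S K + k)%nat)).
  { intros j K. rewrite (Series_incr_n _ (S K)); auto; [|lia]. simpl pred. rewrite sum_n_Reals. ring. }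
  assert (F3 : forall j K, Rabs (Series (fun k => a j (S K + k)%nat)) <= u j * V K).
  { intros j K. unfold V. rewrite <- Series_scal_l. apply series_abs_le; auto.
    apply exR_scal_l. apply (proj1 (ex_series_incr_n v (S K))); auto. }
  assert (EV : forall K, ex_series (fun k => v (S K + k)%nat)).
  { intros K. apply (proj1 (ex_series_incr_n v (S K))); auto. }
  assert (F4 : forall K, Rabs (T - sum_n (fun k => Series (fun j => a j k)) K) <= Series u * V K).
  { intros K. rewrite F1. unfold T. rewrite <- Series_minus.
    - rewrite <- Series_scal_r. apply series_abs_le. intros j. rewrite F2. auto.
      apply ex_series_scal_r; auto.
    - apply (series_abs_le _ (fun j => u j * Series v)). intros j.
      destruct (series_abs_le (fun k => a j k) (fun k => u j * v k)) as [_ H]; auto.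
      apply exR_scal_l; auto. rewrite Series_scal_l in H; auto.
      apply ex_series_scal_r; auto.
    - apply ex_series_sum_n; auto. }
  assert (LV : is_lim_seq V 0).
  { apply is_lim_seq_ext with (u := fun K => Series v - sum_n v K).
    - intros K. unfold V. rewrite (Series_incr_n v (S K)); auto; [|lia]. simpl pred. rewrite sum_n_Reals. ring.
    - replace (Finite 0) with (Rbar_minus (Series v) (Series v)).
      apply is_lim_seq_minus'. apply is_lim_seq_const. apply Series_correct; auto.
      simpl. f_equal; ring. }
  apply is_series_lim.
  apply is_lim_seq_le_le with (u := fun K => T - Series u * V K) (w := fun K => T + Series u * V K).
  - intros K. specialize (F4 K). apply Rabs_le_between in F4. lra.
  - replace (Finite T) with (Rbar_minus T (Series u * 0)).
    apply is_lim_seq_minus'. apply is_lim_seq_const. apply (is_lim_seq_scal_l V (Series u) 0); auto.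
    simpl; f_equal; ring.
  - replace (Finite T) with (Rbar_plus T (Series u * 0)).
    apply is_lim_seq_plus'. apply is_lim_seq_const. apply (is_lim_seq_scal_l V (Series u) 0); auto.
    simpl; f_equal; ring.
Qed.

Definition CSeries (f : nat -> C) : C := (Series (fun n => Re (f n)), Series (fun n => Im (f n))).

Lemma Cmod_le_ReIm (z : C) : Cmod z <= Rabs (Re z) + Rabs (Im z).
Proof.
  destruct z as [x y]. unfold Cmod; simpl.
  apply Rsqr_incr_0_var. 2: generalize (Rabs_pos x) (Rabs_pos y); lra.
  rewrite Rsqr_sqrt. 2: nra.
  unfold Rsqr.
  assert (x*x = Rabs x * Rabs x) by (rewrite <- Rabs_mult; symmetry; apply Rabs_right; nra).
  assert (y*y = Rabs y * Rabs y) by (rewrite <- Rabs_mult; symmetry; apply Rabs_right; nra).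
  rewrite !Rmult_1_r, H, H0. generalize (Rabs_pos x) (Rabs_pos y); nra.
Qed.

Lemma im_le_Cmod' (z : C) : Rabs (Im z) <= Cmod z.
Proof. destruct z as [x y]. unfold Cmod; simpl. rewrite <- sqrt_Rsqr_abs. apply sqrt_le_1_alt. unfold Rsqr. nra. Qed.

Lemma CSeries_bound (f : nat -> C) (b : nat -> R) : (forall n, Cmod (f n) <= b n) -> ex_series b ->
  is_series f (CSeries f) /\ Cmod (CSeries f) <= 2 * Series b.
Proof.
  intros H Hb.
  destruct (series_abs_le (fun n => Re (f n)) b) as [E1 B1]; auto.
  { intros n; eapply Rle_trans; [apply re_le_Cmod|auto]. }
  destruct (series_abs_le (fun n => Im (f n)) b) as [E2 B2]; auto.
  { intros n; eapply Rle_trans; [apply im_le_Cmod'|auto]. }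
  split.
  - apply is_series_C; split; apply Series_correct; auto.
  - eapply Rle_trans; [apply Cmod_le_ReIm|]. simpl. lra.
Qed.

Lemma is_series_C_unique (f : nat -> C) l l' : is_series f l -> is_series f l' -> l = l'.
Proof.
  intros H1 H2. apply is_series_C in H1, H2. destruct H1 as [A B], H2 as [A' B'].
  apply is_series_unique in A, B, A', B'. destruct l, l'; simpl in *; congruence.
Qed.

Lemma fubiniC (a : nat -> nat -> C) (u v : nat -> R) :
  (forall j k, Cmod (a j k) <= u j * v k) -> (forall j, 0 <= u j) -> (forall k, 0 <= v k) ->
  ex_series u -> ex_series v ->
  is_series (fun k => CSeries (fun j => a j k)) (CSeries (fun j => CSeries (fun k => a j k))).
Proof.
  intros Hb Hu Hv Eu Ev. apply is_series_C; split; simpl.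
  - apply (fubiniR (fun j k => Re (a j k)) u v); auto.
    intros; eapply Rle_trans; [apply re_le_Cmod|auto].
  - apply (fubiniR (fun j k => Im (a j k)) u v); auto.
    intros; eapply Rle_trans; [apply im_le_Cmod'|auto].
Qed.

Lemma fold_shift (g : nat -> nat) r s : fold_right (fun j acc => (g (S j) + acc)%nat) 0%nat (seq s r)
  = fold_right (fun j acc => (g j + acc)%nat) 0%nat (seq (S s) r).
Proof. revert s; induction r; intros s; simpl; auto. Qed.

Lemma nsum_cons r j m : nsum (S r) (cons_idx j m) = (j + nsum r m)%nat.
Proof. unfold nsum. simpl. f_equal. rewrite <- fold_shift. reflexivity. Qed.

Lemma CSeries_ext f g : (forall n, f n = g n) -> CSeries f = CSeries g.
Proof. intros H. unfold CSeries. f_equal; apply Series_ext; intros; rewrite H; auto. Qed.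

Lemma geom_facts (rho : R) : 0 <= rho < 1 -> ex_series (fun j => rho ^ j) /\ Series (fun j => rho ^ j) = 1 / (1 - rho).
Proof.
  intros H. assert (Hr : Rabs rho < 1) by (rewrite Rabs_right; lra).
  split. apply ex_series_geom; auto. apply is_series_unique. replace (1 / (1 - rho)) with (/ (1 - rho)) by (field; lra). apply is_series_geom; auto.
Qed.

Lemma msum_dom (r : nat) : forall (F : (nat -> nat) -> nat -> C) (A rho : R) (b : nat -> R),
  0 <= A -> 0 <= rho < 1 -> (forall k, 0 <= b k) -> ex_series b ->
  (forall m k, Cmod (F m k) <= A * rho ^ (nsum r m) * b k) ->
  exists S : nat -> C, exists T : C,
    (forall k, is_msum r (fun m => F m k) (S k)) /\
    (forall k, Cmod (S k) <= A * (2 / (1 - rho)) ^ r * b k) /\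
    is_series S T /\
    (forall H : (nat -> nat) -> C, (forall m, is_series (F m) (H m)) -> is_msum r H T).
Proof.
  induction r; intros F A rho b HA Hrho Hb Eb HF.
  - exists (F (fun _ => 0%nat)). exists (CSeries (F (fun _ => 0%nat))).
    destruct (CSeries_bound (F (fun _ => 0%nat)) (fun k => A * b k)) as [H1 H2].
    { intros k. specialize (HF (fun _ => 0%nat) k). simpl in HF. lra. }
    { apply exR_scal_l; auto. }
    split; [|split; [|split]].
    + intros k. simpl. reflexivity.
    + intros k. specialize (HF (fun _ => 0%nat) k). simpl in *. lra.
    + auto.
    + intros H HH. simpl. eapply is_series_C_unique; eauto.
  - set (c := 2 / (1 - rho)).
    assert (Hc : 0 <= c) by (unfold c; apply Rle_div_r; lra).
    set (Q := fun j (p : (nat -> C) * C) =>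
      (forall k, is_msum r (fun m => F (cons_idx j m) k) (fst p k)) /\
      (forall k, Cmod (fst p k) <= (A * rho ^ j) * c ^ r * b k) /\
      is_series (fst p) (snd p) /\
      (forall H : (nat -> nat) -> C, (forall m, is_series (F (cons_idx j m)) (H m)) -> is_msum r H (snd p))).
    assert (IH' : forall j, exists p, Q j p).
    { intros j. destruct (IHr (fun m k => F (cons_idx j m) k) (A * rho ^ j) rho b) as [S [T HST]]; auto.
      - apply Rmult_le_pos; auto. apply pow_le; lra.
      - intros m k. specialize (HF (cons_idx j m) k). rewrite nsum_cons, pow_add in HF. lra.
      - exists (S, T). exact HST. }
    set (P := fun j => proj1_sig (constructive_indefinite_description _ (IH' j))).
    assert (HP : forall j, Q j (P j)) by (intros j; exact (proj2_sig (constructive_indefinite_description _ (IH' j)))).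
    clearbody P. unfold Q in HP.
    set (Sj := fun j => fst (P j)). set (Tj := fun j => snd (P j)).
    destruct (geom_facts rho Hrho) as [Eg Sg].
    assert (BS : forall j k, Cmod (Sj j k) <= (A * c ^ r * b k) * rho ^ j).
    { intros j k. destruct (HP j) as [_ [B _]]. specialize (B k). unfold Sj. lra. }
    assert (BT : forall j, Cmod (Tj j) <= (2 * A * c ^ r * Series b) * rho ^ j).
    { intros j. destruct (HP j) as [_ [B [C1 _]]]. unfold Tj in *.
      destruct (CSeries_bound (fst (P j)) (fun k => (A * rho ^ j * c ^ r) * b k)) as [D1 D2].
      { intros k. specialize (B k). lra. }
      { apply exR_scal_l; auto. }
      rewrite Series_scal_l in D2. unfold Tj.
      rewrite (is_series_C_unique _ _ _ C1 D1). lra. }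
    exists (fun k => CSeries (fun j => Sj j k)). exists (CSeries Tj).
    split; [|split; [|split]].
    + intros k. simpl. exists (fun j => Sj j k). split.
      * intros j. destruct (HP j) as [A1 _]. apply A1.
      * apply (CSeries_bound _ (fun j => (A * c ^ r * b k) * rho ^ j)); auto. apply exR_scal_l; auto.
    + intros k. destruct (CSeries_bound (fun j => Sj j k) (fun j => (A * c ^ r * b k) * rho ^ j)) as [_ D]; auto.
      apply exR_scal_l; auto.
      rewrite Series_scal_l in D. change (Series (pow rho)) with (Series (fun j => rho ^ j)) in D. rewrite Sg in D. simpl. 
      replace (A * (c * c ^ r) * b k) with (2 * (A * c ^ r * b k * (1 / (1 - rho))));
        [exact D|]. unfold c. field. lra.
    + assert (E := fubiniC (fun j k => Sj j k) (fun j => A * c ^ r * rho ^ j) b).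
      replace (CSeries Tj) with (CSeries (fun j => CSeries (fun k => Sj j k))).
      * apply E; auto.
        -- intros j k. specialize (BS j k). lra.
        -- intros j. apply Rmult_le_pos; [apply Rmult_le_pos; auto; apply pow_le; auto|apply pow_le; lra].
        -- apply exR_scal_l; auto.
      * apply CSeries_ext. intros j. destruct (HP j) as [_ [B [C1 _]]].
        eapply is_series_C_unique; [|exact C1].
        unfold Sj in *. apply (CSeries_bound _ (fun k => (A * rho ^ j * c ^ r) * b k)).
        { intros k. specialize (B k). lra. } { apply exR_scal_l; auto. }
    + intros H HH. simpl. exists Tj. split.
      * intros j. destruct (HP j) as [_ [_ [_ D]]]. apply D. intros m. apply HH.
      * apply (CSeries_bound _ (fun j => (2 * A * c ^ r * Series b) * rho ^ j)); auto. apply exR_scal_l; auto.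
Qed.

Lemma pow_n_S (z : C) n : pow_n z (S n) = (z * pow_n z n)%C.
Proof. reflexivity. Qed.

Lemma Cmod_pow_n (z : C) n : Cmod (pow_n z n) = Cmod z ^ n.
Proof. induction n. simpl. apply Cmod_1. rewrite pow_n_S, Cmod_mult, IHn. reflexivity. Qed.

Lemma trig_comb_bound X Y c d : Rabs X <= 1 -> Rabs Y <= 1 -> Rabs c <= 1 -> Rabs d <= 1 ->
  Rabs (X * c - Y * d) <= 2 /\ Rabs (X * c + Y * d) <= 2.
Proof.
  intros. assert (Rabs (X*c) <= 1). { rewrite Rabs_mult. replace 1 with (1*1) by ring. apply Rmult_le_compat; auto; apply Rabs_pos. }
  assert (Rabs (Y*d) <= 1). { rewrite Rabs_mult. replace 1 with (1*1) by ring. apply Rmult_le_compat; auto; apply Rabs_pos. }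
  split. unfold Rminus. eapply Rle_trans; [apply Rabs_triang|]. rewrite Rabs_Ropp. lra.
  eapply Rle_trans; [apply Rabs_triang|]. lra.
Qed.

Section DN.
Variables a b : R.
Definition fRe s := exp (a * s) * cos (b * s).
Definition fIm s := exp (a * s) * sin (b * s).
Definition w : C := (a, b).
Definition gRe n s := exp (a * s) * (Re (pow_n w n) * cos (b * s) - Im (pow_n w n) * sin (b * s)).
Definition gIm n s := exp (a * s) * (Im (pow_n w n) * cos (b * s) + Re (pow_n w n) * sin (b * s)).

Lemma gRe_deriv n s : is_derive (gRe n) s (gRe (S n) s).
Proof.
  unfold gRe. rewrite pow_n_S. set (X := Re (pow_n w n)). set (Y := Im (pow_n w n)).
  replace (Re (w * pow_n w n)%C) with (a * X - b * Y) by (unfold X, Y; destruct (pow_n w n); simpl; ring).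
  replace (Im (w * pow_n w n)%C) with (a * Y + b * X) by (unfold X, Y; destruct (pow_n w n); simpl; ring).
  auto_derive; auto. ring.
Qed.

Lemma gIm_deriv n s : is_derive (gIm n) s (gIm (S n) s).
Proof.
  unfold gIm. rewrite pow_n_S. set (X := Re (pow_n w n)). set (Y := Im (pow_n w n)).
  replace (Re (w * pow_n w n)%C) with (a * X - b * Y) by (unfold X, Y; destruct (pow_n w n); simpl; ring).
  replace (Im (w * pow_n w n)%C) with (a * Y + b * X) by (unfold X, Y; destruct (pow_n w n); simpl; ring).
  auto_derive; auto. ring.
Qed.

Lemma DnRe n : forall s, Derive_n fRe n s = gRe n s.
Proof.
  induction n; intros s.
  - simpl. unfold fRe, gRe. simpl. ring.
  - simpl. rewrite (Derive_ext _ _ _ IHn). apply is_derive_unique. apply gRe_deriv.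
Qed.

Lemma DnIm n : forall s, Derive_n fIm n s = gIm n s.
Proof.
  induction n; intros s.
  - simpl. unfold fIm, gIm. simpl. ring.
  - simpl. rewrite (Derive_ext _ _ _ IHn). apply is_derive_unique. apply gIm_deriv.
Qed.

Lemma exDnRe n s : ex_derive_n fRe n s.
Proof. destruct n; simpl; auto. eapply ex_derive_ext. intros t; symmetry; apply DnRe. eexists; apply gRe_deriv. Qed.
Lemma exDnIm n s : ex_derive_n fIm n s.
Proof. destruct n; simpl; auto. eapply ex_derive_ext. intros t; symmetry; apply DnIm. eexists; apply gIm_deriv. Qed.

Hypothesis Hw : Cmod w <= 1.

Lemma comp_bound n : Rabs (Re (pow_n w n)) <= 1 /\ Rabs (Im (pow_n w n)) <= 1.
Proof.
  assert (H : Cmod (pow_n w n) <= 1).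
  { rewrite Cmod_pow_n. rewrite <- (pow1 n). apply pow_incr. split; auto. apply Cmod_ge_0. }
  split; eapply Rle_trans; try apply H. apply re_le_Cmod. apply im_le_Cmod'.
Qed.

Lemma exp_bound R0 s : Rabs s < R0 -> exp (a * s) <= exp R0.
Proof.
  intros Hs. assert (Ha : Rabs a <= 1) by (eapply Rle_trans; [|exact Hw]; apply (re_le_Cmod w)).
  assert (a * s <= R0).
  { eapply Rle_trans. apply Rle_abs. rewrite Rabs_mult. generalize (Rabs_pos a) (Rabs_pos s); nra. }
  destruct (Rle_lt_or_eq_dec _ _ H) as [H'|H']; [left; apply exp_increasing; auto | rewrite H'; right; auto].
Qed.

Lemma fRe_series s : is_series (fun n => Re (pow_n w n) / INR (fact n) * s ^ n) (fRe s).
Proof.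
  apply is_pseries_R.
  assert (E : forall n, Derive_n fRe n 0 / INR (fact n) = Re (pow_n w n) / INR (fact n)).
  { intros n. rewrite DnRe. unfold gRe. rewrite Rmult_0_r, Rmult_0_r, exp_0, cos_0, sin_0. f_equal; ring. }
  eapply is_pseries_ext; [exact E|].
  apply (mk_pseries fRe (exp (Rabs s + 1) * 2) (Finite (Rabs s + 1))).
  - intros n x Hx. simpl in Hx. split. apply exDnRe. rewrite DnRe. unfold gRe.
    destruct (comp_bound n) as [B1 B2]. rewrite Rabs_mult, (Rabs_right (exp _)) by (left; apply exp_pos).
    apply Rmult_le_compat; try apply Rabs_pos. left; apply exp_pos. apply exp_bound; auto.
    apply trig_comb_bound; auto; apply Rabs_le; auto using COS_bound, SIN_bound.
  - simpl. lra.
Qed.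

Lemma fIm_series s : is_series (fun n => Im (pow_n w n) / INR (fact n) * s ^ n) (fIm s).
Proof.
  apply is_pseries_R.
  assert (E : forall n, Derive_n fIm n 0 / INR (fact n) = Im (pow_n w n) / INR (fact n)).
  { intros n. rewrite DnIm. unfold gIm. rewrite Rmult_0_r, Rmult_0_r, exp_0, cos_0, sin_0. f_equal; ring. }
  eapply is_pseries_ext; [exact E|].
  apply (mk_pseries fIm (exp (Rabs s + 1) * 2) (Finite (Rabs s + 1))).
  - intros n x Hx. simpl in Hx. split. apply exDnIm. rewrite DnIm. unfold gIm.
    destruct (comp_bound n) as [B1 B2]. rewrite Rabs_mult, (Rabs_right (exp _)) by (left; apply exp_pos).
    apply Rmult_le_compat; try apply Rabs_pos. left; apply exp_pos. apply exp_bound; auto.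
    apply trig_comb_bound; auto; apply Rabs_le; auto using COS_bound, SIN_bound.
  - simpl. lra.
Qed.
End DN.

Lemma pow_n_scal (c : R) (u : C) n : pow_n (RtoC c * u)%C n = (RtoC (c ^ n) * pow_n u n)%C.
Proof.
  induction n. simpl. rewrite Cmult_1_l; auto. rewrite !pow_n_S, IHn. simpl pow. rewrite RtoC_mult. generalize (pow_n u n : C). intros p. match goal with |- ?x = ?y => change (@eq Complex.C x y) end. ring.
Qed.

Lemma cexp_series (z : C) : is_series (fun n => pow_n z n * RtoC (/ INR (fact n)))%C (cexp z).
Proof.
  set (N := Cmod z + 1).
  assert (HN : 0 < N) by (unfold N; generalize (Cmod_ge_0 z); lra).
  set (a := Re z / N). set (b := Im z / N).
  assert (Hz : z = (RtoC N * w a b)%C).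
  { destruct z as [x y]. unfold w, a, b. simpl. unfold RtoC, Cmult. simpl. f_equal; field; lra. }
  assert (Hw : Cmod (w a b) <= 1).
  { assert (E : w a b = (RtoC (/ N) * z)%C).
    { rewrite Hz. rewrite Cmult_assoc, <- RtoC_mult, Rinv_l by lra. rewrite Cmult_1_l. auto. }
    rewrite E, Cmod_mult, Cmod_R, Rabs_right by (left; apply Rinv_0_lt_compat; lra).
    apply Rmult_le_reg_l with N; auto. rewrite <- Rmult_assoc, Rinv_r by lra. unfold N. lra. }
  assert (E1 : Re (cexp z) = fRe a b N) by (unfold fRe, a, b, cexp; simpl; f_equal; f_equal; field; lra).
  assert (E2 : Im (cexp z) = fIm a b N) by (unfold fIm, a, b, cexp; simpl; f_equal; f_equal; field; lra).
  apply is_series_C. rewrite E1, E2. split.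
  - eapply is_series_ext; [|apply (fRe_series a b Hw N)].
    intros n. cbv beta. rewrite Hz. rewrite pow_n_scal. destruct (pow_n (w a b) n) as [p1 p2]. simpl. unfold Rdiv. ring.
  - eapply is_series_ext; [|apply (fIm_series a b Hw N)].
    intros n. cbv beta. rewrite Hz. rewrite pow_n_scal. destruct (pow_n (w a b) n) as [p1 p2]. simpl. unfold Rdiv. ring.
Qed.

Lemma cexp_add (u v : C) : cexp (u + v)%C = (cexp u * cexp v)%C.
Proof.
  destruct u as [a b], v as [c d]. unfold cexp; simpl. rewrite exp_plus, cos_plus, sin_plus.
  unfold Cmult; simpl. f_equal; ring.
Qed.

Lemma cexp_0 : cexp 0%C = 1%C.
Proof. unfold cexp; simpl. rewrite exp_0, cos_0, sin_0. unfold RtoC. f_equal; ring. Qed.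

Lemma Cmod_cexp (u : C) : Cmod (cexp u) = exp (Re u).
Proof.
  destruct u as [a b]. unfold cexp, Cmod; simpl.
  match goal with |- sqrt ?e = _ => replace e with (exp a ^ 2 * ((sin b)² + (cos b)²)) by (unfold Rsqr; ring) end.
  rewrite sin2_cos2, Rmult_1_r. apply sqrt_pow2. left; apply exp_pos.
Qed.

Lemma cexp_neq0 (u : C) : cexp u <> 0%C.
Proof. intros H. generalize (Cmod_cexp u). rewrite H, Cmod_0. generalize (exp_pos (Re u)). lra. Qed.

Lemma sqrt_split x y : x <> 0 -> sqrt (x ^ 2 + y ^ 2) = Rabs x * sqrt (1 + (y / x)²).
Proof.
  intros Hx. rewrite <- sqrt_Rsqr_abs. rewrite <- sqrt_mult.
  - f_equal. unfold Rsqr. field. auto.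
  - apply Rle_0_sqr.
  - generalize (Rle_0_sqr (y/x)). lra.
Qed.

Lemma cexp_clog (z : C) : z <> 0%C -> cexp (clog z) = z.
Proof.
  intros Hz. destruct z as [x y]. unfold clog, cexp.
  assert (HC : 0 < Cmod (x, y)).
  { apply Cmod_gt_0. auto. }
  unfold Re, Im. cbn [fst snd].
  rewrite exp_ln by auto. assert (HS : Cmod (x, y) = sqrt (x ^ 2 + y ^ 2)) by reflexivity.
  rewrite HS in *. unfold carg, Re, Im. cbn [fst snd].
  assert (Hs : 0 < sqrt (1 + (y / x)²)) by (apply sqrt_lt_R0; generalize (Rle_0_sqr (y/x)); lra).
  destruct (Rlt_dec 0 x) as [Hx|Hx].
  - rewrite cos_atan, sin_atan, sqrt_split by lra. rewrite Rabs_right by lra.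
    f_equal; field; lra.
  - destruct (Rlt_dec x 0) as [Hx'|Hx'].
    + rewrite sqrt_split by lra. rewrite Rabs_left by lra.
      destruct (Rle_dec 0 y).
      * rewrite neg_cos, neg_sin, cos_atan, sin_atan. f_equal; field; lra.
      * rewrite cos_minus, sin_minus, cos_PI, sin_PI, cos_atan, sin_atan. f_equal; field; lra.
    + assert (x = 0) by lra. subst x.
      destruct (Rlt_dec 0 y).
      * rewrite cos_PI2, sin_PI2. replace (0 ^ 2 + y ^ 2) with (y ^ 2) by ring. rewrite sqrt_pow2 by lra. f_equal; ring.
      * destruct (Rlt_dec y 0).
        -- rewrite cos_neg, sin_neg, cos_PI2, sin_PI2. replace (0 ^ 2 + y ^ 2) with ((-y) ^ 2) by ring.
           rewrite sqrt_pow2 by lra. f_equal; ring.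
        -- exfalso. apply Hz. unfold RtoC. f_equal; lra.
Qed.

Lemma C_neq0 (z : C) : z <> 0%C -> ~ (Re z = 0 /\ Im z = 0).
Proof. intros Hz [H1 H2]. apply Hz. destruct z; simpl in *; subst. reflexivity. Qed.

Lemma cpow_nz (z s : C) : z <> 0%C -> cpow z s = cexp (s * clog z)%C.
Proof.
  intros Hz. apply C_neq0 in Hz. unfold cpow.
  destruct (Req_EM_T (Re z) 0), (Req_EM_T (Im z) 0); auto. tauto.
Qed.

Lemma cexp_nat (n : nat) (u : C) : cexp (RtoC (INR n) * u)%C = pow_n (cexp u) n.
Proof.
  induction n.
  - simpl. rewrite Cmult_0_l. apply cexp_0.
  - rewrite S_INR, RtoC_plus. change (pow_n (cexp u) (S n)) with (cexp u * pow_n (cexp u) n)%C.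
    rewrite <- IHn, <- cexp_add. f_equal. ring.
Qed.

Lemma pow_n_neq0 (z : C) n : z <> 0%C -> (pow_n z n : C) <> RtoC 0.
Proof.
  intros Hz. induction n. simpl. intros H. injection H; lra.
  change (pow_n z (S n)) with (z * pow_n z n)%C. apply Cmult_neq_0; auto.
Qed.

Lemma l_term_pow_nz (z c : C) (n : nat) : z <> 0%C -> (c / cpow z (RtoC (- INR n)))%C = (c * pow_n z n)%C.
Proof.
  intros Hz.
    rewrite cpow_nz by auto.
    assert (E : (cexp (RtoC (- INR n) * clog z) * cexp (RtoC (INR n) * clog z))%C = 1%C).
    { rewrite <- cexp_add. rewrite <- cexp_0. f_equal. rewrite RtoC_opp. ring. }
    rewrite cexp_nat, cexp_clog in E by auto.
    assert (Hc : cexp (RtoC (- INR n) * clog z) <> 0%C) by apply cexp_neq0.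
    assert (Hp := pow_n_neq0 z n Hz).
    revert E Hp Hc. generalize (pow_n z n : C). generalize (cexp (RtoC (- INR n) * clog z) : C).
    intros e p E Hp Hc.
    unfold Cdiv. f_equal. transitivity (/ e * (e * p))%C. rewrite E. ring. field. auto.
Qed.

Lemma l_term_pow (z c : C) (n : nat) : (c / cpow z (RtoC (- INR n)))%C = (c * pow_n z n)%C.
Proof.
  destruct (Req_EM_T (Re z) 0) as [H1|H1]; [destruct (Req_EM_T (Im z) 0) as [H2|H2]|].
  - assert (Hz : z = 0%C) by (destruct z; simpl in *; subst; reflexivity). subst z.
    unfold cpow. simpl Re. simpl Im.
    destruct (Req_EM_T 0 0) as [_|C1]; [|lra]. destruct (Req_EM_T 0 0) as [_|C2]; [|lra].
    destruct n.
    + simpl. replace (- 0) with 0 by ring. destruct (Req_EM_T 0 0); [|lra]. destruct (Req_EM_T 0 0); [|lra].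
      destruct c as [x y]. unfold Cdiv, Cinv, Cmult, RtoC. simpl. f_equal; field.
    + assert (Hn : - INR (S n) <> 0) by (rewrite S_INR; generalize (pos_INR n); lra).
      simpl Re. destruct (Req_dec_T (- INR (S n)) 0); [lra|].
      simpl pow_n. generalize (pow_n (RtoC 0) n : C). intros [p1 p2]. destruct c as [x y].
      unfold Cdiv, Cinv, Cmult, RtoC; simpl. f_equal; unfold Rdiv; ring.
  - apply l_term_pow_nz. intros E; subst; apply H2; reflexivity.
  - apply l_term_pow_nz. intros E; subst; apply H1; reflexivity.
Qed.

Lemma radius_pos (α : nat -> R) s : 0 < s -> ex_series (fun k => α k * s ^ k) -> Rbar_lt 0 (CV_radius α).
Proof.
  intros Hs He. apply ex_series_lim_0 in He.
  destruct (filterlim_bounded (V := R_NormedModule) (fun k => α k * s ^ k)) as [M HM].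
  { exists 0. exact He. }
  destruct (CV_radius_bounded α) as [Hub _].
  apply Rbar_lt_le_trans with (Finite s). simpl; auto.
  apply Hub. exists M. intros n. apply HM.
Qed.

Lemma pser_unique (α β : nat -> R) δ : 0 < δ ->
  (forall s, Rabs s < δ -> exists l, is_series (fun k => α k * s ^ k) l /\ is_series (fun k => β k * s ^ k) l) ->
  forall n, α n = β n.
Proof.
  intros Hd H n.
  destruct (H (δ/2)) as [l [H1 H2]]. { rewrite Rabs_right; lra. }
  apply PSeries_ext_recip.
  - apply (radius_pos α (δ/2)). lra. eexists; eauto.
  - apply (radius_pos β (δ/2)). lra. eexists; eauto.
  - exists (mkposreal δ Hd). intros x Hx. 
    assert (Hx' : Rabs x < δ). { change (Rabs (x - 0) < δ) in Hx. rewrite Rminus_0_r in Hx. auto. }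
    destruct (H x Hx') as [l' [A B]].
    rewrite (is_pseries_unique α x l'), (is_pseries_unique β x l'); auto; apply is_pseries_R; auto.
Qed.

Lemma pow_n_RtoC (s : R) k : pow_n (RtoC s) k = RtoC (s ^ k).
Proof.
  induction k. reflexivity.
  change (pow_n (RtoC s) (S k)) with (RtoC s * pow_n (RtoC s) k)%C. rewrite IHk.
  simpl pow. rewrite RtoC_mult. reflexivity.
Qed.

Lemma Cdiv_R (u : C) (c : R) : c <> 0 -> (u / RtoC c)%C = (u * RtoC (/ c))%C.
Proof. intros Hc. destruct u as [x y]. unfold Cdiv, Cinv, Cmult, RtoC; simpl. f_equal; field; auto. Qed.

Lemma coef_match (Se E : nat -> C) δ : 0 < δ ->
  (forall s : R, Rabs s < δ -> exists G : C, is_series (fun k => (Se k * pow_n (RtoC s) k)%C) G /\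
      is_series (fun k => (E k * pow_n (RtoC s) k / RtoC (INR (fact k)))%C) G) ->
  forall n, (Se n * RtoC (INR (fact n)))%C = E n.
Proof.
  intros Hd H.
  assert (Hf : forall k, INR (fact k) <> 0) by (intros k; apply INR_fact_neq_0).
  assert (Hr : forall n, Re (Se n) = Re (E n) / INR (fact n)).
  { apply (pser_unique _ _ δ Hd). intros s Hs. destruct (H s Hs) as [G [A B]].
    apply is_series_C in A, B. destruct A as [A A'], B as [B B']. exists (Re G). split.
    - eapply is_series_ext; [|apply A]. intros k. cbv beta. rewrite pow_n_RtoC, re_scal_r. auto.
    - eapply is_series_ext; [|apply B]. intros k. cbv beta. rewrite pow_n_RtoC, Cdiv_R, re_scal_r, re_scal_r by auto.
      unfold Rdiv; match goal with |- ?x = ?y => change (@eq R x y) end; ring. }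
  assert (Hi : forall n, Im (Se n) = Im (E n) / INR (fact n)).
  { apply (pser_unique _ _ δ Hd). intros s Hs. destruct (H s Hs) as [G [A B]].
    apply is_series_C in A, B. destruct A as [A' A], B as [B' B]. exists (Im G). split.
    - eapply is_series_ext; [|apply A]. intros k. cbv beta. rewrite pow_n_RtoC, im_scal_r. auto.
    - eapply is_series_ext; [|apply B]. intros k. cbv beta. rewrite pow_n_RtoC, Cdiv_R, im_scal_r, im_scal_r by auto.
      unfold Rdiv; match goal with |- ?x = ?y => change (@eq R x y) end; ring. }
  intros n. specialize (Hr n). specialize (Hi n). destruct (Se n) as [a b], (E n) as [c d].
  simpl in *. unfold Cmult, RtoC; simpl. rewrite Hr, Hi. f_equal; field; auto.
Qed.

Lemma is_series_Cmult_r (g : nat -> C) (l c : C) : is_series g l -> is_series (fun k => (g k * c)%C) (l * c)%C.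
Proof.
  intros H. apply (is_series_scal (K := C_AbsRing) (V := C_NormedModule) c) in H.
  replace (l * c)%C with (scal c l : C) by (unfold scal; simpl; unfold mult; simpl; apply Cmult_comm).
  eapply is_series_ext; [|exact H]. intros k. simpl. unfold scal; simpl. unfold mult; simpl. apply Cmult_comm.
Qed.

Lemma is_series_Cmult_l (g : nat -> C) (l c : C) : is_series g l -> is_series (fun k => (c * g k)%C) (c * l)%C.
Proof.
  intros H. apply is_series_Cmult_r with (c := c) in H. rewrite Cmult_comm.
  eapply is_series_ext; [|exact H]. intros; apply Cmult_comm.
Qed.

Lemma is_msum_ext r : forall F G l, (forall m, F m = G m) -> is_msum r F l -> is_msum r G l.
Proof.
  induction r; intros F G l HFG H; simpl in *.
  - rewrite <- HFG; auto.
  - destruct H as [g [H1 H2]]. exists g. split; auto. intros k. eapply IHr; [|apply H1]. intros m; apply HFG.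
Qed.

Lemma is_msum_unique r : forall F l l', is_msum r F l -> is_msum r F l' -> l = l'.
Proof.
  induction r; intros F l l' H H'; simpl in *.
  - congruence.
  - destruct H as [g [H1 H2]], H' as [g' [H1' H2']].
    assert (E : forall k, g k = g' k) by (intros k; eapply IHr; eauto).
    eapply is_series_C_unique; [exact H2|]. eapply is_series_ext; [|exact H2']. intros; auto.
Qed.

Lemma is_msum_scal r : forall F l c, is_msum r F l -> is_msum r (fun m => (F m * c)%C) (l * c)%C.
Proof.
  induction r; intros F l c H; simpl in *.
  - rewrite H; auto.
  - destruct H as [g [H1 H2]]. exists (fun k => (g k * c)%C). split.
    + intros k. apply (IHr (fun m => F (cons_idx k m))). auto.
    + apply is_series_Cmult_r; auto.
Qed.

Lemma exp_le_mono x y : x <= y -> exp x <= exp y.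
Proof. intros H. destruct (Rle_lt_or_eq_dec _ _ H) as [H'|H']; [left; apply exp_increasing; auto | rewrite H'; right; auto]. Qed.

Lemma fold_real_Im (h : nat -> R) l : Im (fold_right (fun j acc => (RtoC (h j) + acc)%C) 0%C l) = 0.
Proof. induction l; simpl; auto. unfold Im in IHl. rewrite IHl. ring. Qed.

Lemma fold_real_Re (h : nat -> R) l : (forall j, In j l -> 0 <= h j) ->
  0 <= Re (fold_right (fun j acc => (RtoC (h j) + acc)%C) 0%C l).
Proof.
  induction l; simpl; intros H. lra.
  assert (0 <= h a) by auto. assert (0 <= Re (fold_right (fun j acc => (RtoC (h j) + acc)%C) 0%C l)) by auto. unfold Re in *. simpl. lra.
Qed.

Lemma shift_Re x r w m : (forall j, (j < r)%nat -> 0 < w j) -> Re x <= Re (shift x r w m).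
Proof.
  intros Hw. unfold shift, csum. simpl Re at 2.
  assert (0 <= Re (fold_right (fun j acc => (RtoC (w j * INR (m j)) + acc)%C) 0%C (seq 0 r))).
  { apply (fold_real_Re (fun j => w j * INR (m j))). intros j Hj. apply in_seq in Hj.
    apply Rmult_le_pos. left; apply Hw; lia. apply pos_INR. }
  unfold Re in *. lra.
Qed.

Lemma shift_Im x r w m : Im (shift x r w m) = Im x.
Proof.
  unfold shift, csum. simpl Im at 1.
  rewrite (fold_real_Im (fun j => w j * INR (m j))). unfold Im. ring.
Qed.

Lemma Re_lin (u v L : C) (k : R) : Re ((u * RtoC k + v) * L)%C = k * Re (u * L)%C + Re (v * L)%C.
Proof. destruct u, v, L; simpl; ring. Qed.

Lemma fold_exp_bound (a : nat -> C) (m : nat -> nat) (L : C) (K : R) l :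
  (forall j, In j l -> Re (a j * L)%C <= K) ->
  Re (fold_right (fun j acc => (a j * RtoC (INR (m j)) + acc)%C) 0%C l * L)%C
    <= INR (fold_right (fun j acc => (m j + acc)%nat) 0%nat l) * K.
Proof.
  induction l; cbn [fold_right]; intros H.
  - destruct L. simpl. lra.
  - rewrite Re_lin, plus_INR.
    assert (Re (a a0 * L)%C <= K) by (apply H; left; reflexivity).
    assert (IH := IHl (fun j Hj => H j (or_intror Hj))).
    generalize (pos_INR (m a0)); nra.
Qed.

Lemma fold_prod_bound (g : nat -> C) (X : R) l : 0 <= X -> (forall j, Cmod (g j) <= X) ->
  Cmod (fold_right (fun j acc => (g j * acc)%C) 1%C l) <= X ^ length l.
Proof.
  intros HX Hg. induction l; cbn [fold_right length pow].
  - rewrite Cmod_1. lra.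
  - rewrite Cmod_mult. apply Rmult_le_compat; auto using Cmod_ge_0.
Qed.

Lemma Cmod_cpow_nz (q y : C) : q <> 0%C -> Cmod (cpow q y) = exp (Re (y * clog q)%C).
Proof. intros Hq. rewrite cpow_nz by auto. apply Cmod_cexp. Qed.

Lemma coef_bound (q : C) (chi : nat -> C) r (a : nat -> C) (m : nat -> nat) (X rho : R) : q <> 0%C -> 0 <= X -> (forall n, Cmod (chi n) <= X) -> 0 < rho ->
  (forall j, (j < r)%nat -> Cmod (cpow q (a j)) <= rho) ->
  Cmod (coef q chi r a m) <= (2 ^ r * X ^ r) * rho ^ (nsum r m).
Proof.
  intros Hq HX Hchi Hrho Ha. unfold coef.
  rewrite !Cmod_mult, Cmod_R, Cmod_R.
  rewrite Rabs_right by (left; apply pow_lt; lra). rewrite pow_1_abs, Rmult_1_r.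
  assert (H1 : Cmod (cprod r (fun j => chi (m j))) <= X ^ r).
  { unfold cprod. rewrite <- (length_seq r 0) at 2. apply fold_prod_bound; auto. }
  assert (H2 : Cmod (cpow q (csum r (fun j => (a j * RtoC (INR (m j)))%C))) <= rho ^ nsum r m).
  { rewrite Cmod_cpow_nz by auto. rewrite <- Rpower_pow by auto. unfold Rpower.
    apply exp_le_mono. unfold csum, nsum. apply fold_exp_bound.
    intros j Hj. apply in_seq in Hj.
    specialize (Ha j ltac:(lia)). rewrite Cmod_cpow_nz in Ha by auto.
    rewrite <- (ln_exp (Re (a j * clog q)%C)). apply ln_le; auto. apply exp_pos. }
  assert (0 < 2 ^ r) by (apply pow_lt; lra).
  apply Rmult_le_compat; try apply Cmod_ge_0; auto.
  - apply Rmult_le_pos; [lra|apply Cmod_ge_0].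
  - apply Rmult_le_compat_l; auto. lra.
Qed.

Lemma qint_bound (q x : C) r (w : nat -> R) (m : nat -> nat) : q <> 0%C -> Cmod q < 1 -> 0 < Re x -> (forall j, (j < r)%nat -> 0 < w j) ->
  Cmod (qint q (shift x r w m)) <= (1 + exp (- Im x * carg q)) / (1 - Cmod q).
Proof.
  intros Hq Hq1 Hx Hw. unfold qint.
  assert (H1q : (1 - q)%C <> 0%C).
  { intros E. assert (q = 1%C). { rewrite <- (Cplus_0_l q), <- E. ring. } subst q. rewrite Cmod_1 in Hq1. lra. }
  assert (Hm : 1 - Cmod q <= Cmod (1 - q)%C).
  { assert (Cmod 1%C <= Cmod (1 - q)%C + Cmod q). { replace (RtoC 1) with ((1 - q) + q)%C at 1 by ring. apply Cmod_triangle. }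
    rewrite Cmod_1 in H. lra. }
  rewrite Cmod_div by auto.
  unfold Rdiv. apply Rmult_le_compat.
  - apply Cmod_ge_0.
  - left; apply Rinv_0_lt_compat. apply Cmod_gt_0; auto.
  - eapply Rle_trans. unfold Cminus. apply Cmod_triangle. rewrite Cmod_opp, Cmod_1.
    apply Rplus_le_compat_l. rewrite Cmod_cpow_nz by auto.
    apply exp_le_mono. unfold clog. set (y := shift x r w m).
    assert (Re x <= Re y) by (apply shift_Re; auto).
    assert (Im y = Im x) by apply shift_Im.
    assert (ln (Cmod q) < 0). { rewrite <- ln_1. apply ln_increasing; auto. apply Cmod_gt_0; auto. }
    destruct y as [y1 y2]. simpl in *. subst y2. nra.
  - apply Rinv_le_contravar; auto. lra.
Qed.

Lemma rho_exists r (g : nat -> R) : (forall j, (j < r)%nat -> g j < 1) ->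
  exists rho, 0 < rho < 1 /\ forall j, (j < r)%nat -> g j <= rho.
Proof.
  induction r; intros H.
  - exists (1/2). split. lra. intros; lia.
  - assert (H0 : forall j, (j < r)%nat -> g j < 1) by (intros j Hj; apply H; lia).
    destruct (IHr H0) as [rho [H1 H2]].
    exists (Rmax rho (g r)). split.
    + split. eapply Rlt_le_trans; [|apply Rmax_l]; lra. apply Rmax_lub_lt; [lra | apply H; lia].
    + intros j Hj. destruct (Nat.eq_dec j r). subst; apply Rmax_r.
      eapply Rle_trans; [apply H2; lia|apply Rmax_l].
Qed.

Lemma max_in (g : nat -> R) l i : In i l -> g i <= fold_right Rmax 0 (map g l).
Proof.
  induction l; simpl; intros H; [contradiction|]. destruct H as [H|H].
  - subst. apply Rmax_l.
  - eapply Rle_trans; [apply IHl; auto|apply Rmax_r].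
Qed.

Lemma max_nonneg (g : nat -> R) l : 0 <= fold_right Rmax 0 (map g l).
Proof. induction l; simpl. lra. eapply Rle_trans; [exact IHl|apply Rmax_r]. Qed.

Lemma chi_bound f chi : is_dirichlet_char f chi -> exists X, 0 <= X /\ forall n, Cmod (chi n) <= X.
Proof.
  intros [Hf [Hp _]].
  assert (Hk : forall k m, chi (m + k * f)%nat = chi m).
  { induction k; intros m. rewrite Nat.mul_0_l, Nat.add_0_r; auto.
    replace (m + S k * f)%nat with ((m + k * f) + f)%nat by lia. rewrite Hp; auto. }
  exists (fold_right Rmax 0 (map (fun i => Cmod (chi i)) (seq 0 f))). split. apply max_nonneg.
  intros n. rewrite (Nat.div_mod_eq n f). rewrite Nat.mul_comm, Nat.add_comm, Hk.
  apply (max_in (fun i => Cmod (chi i))). apply in_seq. split. lia. simpl.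
  apply Nat.mod_upper_bound. lia.
Qed.

Lemma exp_ex_series (c : R) : ex_series (fun k => c ^ k / INR (fact k)).
Proof.
  exists (exp c). generalize (is_exp_Reals c). intros H. apply is_pseries_R in H.
  eapply is_series_ext; [|exact H]. intros n. simpl. unfold Rdiv. ring.
Qed.

Lemma pow_n_mult (u v : C) k : (pow_n (u * v)%C k : C) = (pow_n u k * pow_n v k)%C.
Proof.
  induction k. simpl. unfold one; simpl. unfold RtoC, Cmult; simpl. f_equal; ring.
  change (pow_n (u * v)%C (S k) : C) with ((u * v) * pow_n (u * v)%C k)%C.
  change (pow_n u (S k) : C) with (u * pow_n u k)%C.
  change (pow_n v (S k) : C) with (v * pow_n v k)%C.
  rewrite IHk. generalize (pow_n u k : C) (pow_n v k : C). intros p1 p2. ring.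
Qed.

Lemma pow_n_one k : (pow_n (RtoC 1) k : C) = RtoC 1.
Proof.
  induction k. reflexivity.
  change (pow_n (RtoC 1) (S k) : C) with (RtoC 1 * pow_n (RtoC 1) k)%C. rewrite IHk. ring.
Qed.

Lemma cpow_0_nz (y : C) : Re y <> 0 -> cpow 0%C y = 0%C.
Proof.
  intros Hy. unfold cpow. simpl Re; simpl Im.
  destruct (Req_EM_T 0 0); [|lra]. destruct (Req_EM_T 0 0); [|lra].
  destruct (Req_EM_T (Re y) 0); [lra|]. reflexivity.
Qed.
Ltac Cring := match goal with |- ?x = ?y => change (@eq C x y) end; ring.

Theorem theorem8
  (q : C) (hq : Cmod q < 1)
  (r : nat) (w : nat -> R) (hw : forall j, (j < r)%nat -> 0 < w j)
  (a : nat -> C)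
  (ha : forall j, (j < r)%nat -> Cmod (cpow q (a j)) < 1)
  (x : C) (hx : 0 < Re x)
  (f : nat) (chi : nat -> C) (hchi : has_conductor f chi) (hf : Nat.Odd f)
  (E : nat -> C)
  (hE : exists delta : R, 0 < delta /\
     forall t : C, Cmod t < delta ->
       exists G : C,
         is_msum r (gen_term q chi r w a x t) G /\
         is_series (fun n => (E n * pow_n t n / RtoC (INR (fact n)))%C) G)
  (n : nat) :
  is_msum r (l_term q chi r w a x (RtoC (- INR n))) (E n).
Proof.
  destruct hE as [delta [Hd hE]].
  set (Q := fun m => qint q (shift x r w m)).
  assert (Hl : forall m, l_term q chi r w a x (RtoC (- INR n)) m = (coef q chi r a m * pow_n (Q m) n)%C).
  { intros m. unfold l_term. apply l_term_pow. }
  assert (Hg : forall t m, gen_term q chi r w a x t m = (coef q chi r a m * cexp (Q m * t))%C) by reflexivity.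
  assert (Hf : forall k, INR (fact k) <> 0) by (intros; apply INR_fact_neq_0).
  assert (Dq : q = 0%C \/ q <> 0%C).
  { destruct (Req_EM_T (Re q) 0) as [Hq1|Hq1]; [destruct (Req_EM_T (Im q) 0) as [Hq2|Hq2]|].
    - left. destruct q; simpl in *; subst; reflexivity.
    - right. intros E0; subst; apply Hq2; reflexivity.
    - right. intros E0; subst; apply Hq1; reflexivity. }
  destruct Dq as [Hq|Hq].
  -
    assert (HQ : forall m, Q m = 1%C).
    { intros m. unfold Q, qint. rewrite Hq, cpow_0_nz.
      - unfold Cdiv, Cinv, Cmult, Cminus, Cplus, Copp, RtoC; simpl. f_equal; field.
      - assert (Re x <= Re (shift x r w m)) by (apply shift_Re; auto). lra. }
    destruct (hE 0%C) as [G0 [HG0 _]]. { rewrite Cmod_0; auto. }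
    assert (HC0 : is_msum r (coef q chi r a) G0).
    { eapply is_msum_ext; [|exact HG0]. intros m. rewrite Hg, HQ, Cmult_1_l, cexp_0, Cmult_1_r. reflexivity. }
    assert (Hmatch : forall k, (G0 * RtoC (/ INR (fact k)) * RtoC (INR (fact k)))%C = E k).
    { apply (coef_match (fun k => G0 * RtoC (/ INR (fact k)))%C E delta Hd).
      intros s Hs. destruct (hE (RtoC s)) as [G [HG HE]]. { rewrite Cmod_R; auto. }
      exists G. split; auto.
      assert (EG : G = (G0 * cexp (RtoC s))%C).
      { eapply is_msum_unique; [exact HG|]. eapply is_msum_ext; [|apply is_msum_scal; exact HC0].
        intros m. cbv beta. rewrite Hg, HQ, Cmult_1_l. reflexivity. }
      rewrite EG. eapply is_series_ext; [|apply is_series_Cmult_l; apply cexp_series].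
      intros k. cbv beta. generalize (pow_n (RtoC s) k : C); intros p. Cring. }
    assert (EG : forall k, E k = G0).
    { intros k. rewrite <- Hmatch. rewrite <- Cmult_assoc, <- RtoC_mult, Rinv_l, Cmult_1_r by auto. reflexivity. }
    rewrite EG. eapply is_msum_ext; [|exact HC0]. intros m. rewrite Hl, HQ, pow_n_one, Cmult_1_r. reflexivity.
  -
    destruct (chi_bound f chi (proj1 hchi)) as [X [HX HchiB]].
    destruct (rho_exists r (fun j => Cmod (cpow q (a j))) ha) as [rho [Hrho Hrj]].
    set (B := (1 + exp (- Im x * carg q)) / (1 - Cmod q)).
    assert (HB : 0 <= B).
    { unfold B. apply Rle_div_r. lra. generalize (exp_pos (- Im x * carg q)). lra. }
    set (A := 2 ^ r * X ^ r).
    assert (HA : 0 <= A) by (unfold A; apply Rmult_le_pos; apply pow_le; lra).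
    assert (HQB : forall m, Cmod (Q m) <= B) by (intros m; apply qint_bound; auto).
    assert (Hcoef : forall m, Cmod (coef q chi r a m) <= A * rho ^ nsum r m)
      by (intros m; apply coef_bound; auto; lra).
    set (Fe := fun m k => (coef q chi r a m * pow_n (Q m) k * RtoC (/ INR (fact k)))%C).
    assert (Hbound : forall (t : C) m k, Cmod (Fe m k * pow_n t k)%C <= A * rho ^ (nsum r m) * ((B * Cmod t) ^ k / INR (fact k))).
    { intros t m k. unfold Fe. rewrite !Cmod_mult, !Cmod_pow_n, Cmod_R.
      assert (Hfp : 0 < / INR (fact k)) by (apply Rinv_0_lt_compat, INR_fact_lt_0).
      rewrite Rabs_right by lra.
      replace (A * rho ^ nsum r m * ((B * Cmod t) ^ k / INR (fact k)))
        with (A * rho ^ nsum r m * B ^ k * / INR (fact k) * Cmod t ^ k) by (unfold Rdiv; rewrite Rpow_mult_distr; ring).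
      apply Rmult_le_compat_r. apply pow_le, Cmod_ge_0.
      apply Rmult_le_compat_r. lra.
      apply Rmult_le_compat; try apply Cmod_ge_0; auto. apply pow_le, Cmod_ge_0.
      apply pow_incr. split; auto. apply Cmod_ge_0. }
    assert (Hb : forall c, 0 <= c -> forall k, 0 <= c ^ k / INR (fact k)).
    { intros c Hc k. unfold Rdiv. apply Rmult_le_pos. apply pow_le; auto. left; apply Rinv_0_lt_compat, INR_fact_lt_0. }
    assert (Hrho' : 0 <= rho < 1) by lra.
    destruct (msum_dom r Fe A rho (fun k => (B * 1) ^ k / INR (fact k)) HA Hrho' (Hb (B * 1) ltac:(lra)) (exp_ex_series _))
      as [Se [Te [HSe _]]].
    { intros m k. specialize (Hbound 1%C m k). rewrite pow_n_one, Cmult_1_r, Cmod_1 in Hbound. exact Hbound. }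
    assert (Hmatch : forall k, (Se k * RtoC (INR (fact k)))%C = E k).
    { apply (coef_match Se E delta Hd).
      intros s Hs. destruct (hE (RtoC s)) as [G [HG HE]]. { rewrite Cmod_R; auto. }
      exists G. split; [|exact HE].
      assert (Hs0 : 0 <= B * Rabs s) by (apply Rmult_le_pos; auto; apply Rabs_pos).
      destruct (msum_dom r (fun m k => (Fe m k * pow_n (RtoC s) k)%C) A rho (fun k => (B * Rabs s) ^ k / INR (fact k))
          HA Hrho' (Hb _ Hs0) (exp_ex_series _)) as [St [Tt [H1 [_ [H3 H4]]]]].
      { intros m k. rewrite <- Cmod_R. apply Hbound. }
      assert (HT : Tt = G).
      { eapply is_msum_unique; [apply H4|exact HG]. intros m. cbv beta.
        rewrite Hg. eapply is_series_ext; [|apply is_series_Cmult_l, cexp_series]. intros k. unfold Fe. cbv beta.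
        rewrite pow_n_mult. generalize (pow_n (Q m) k : C) (pow_n (RtoC s) k : C). intros p1 p2. Cring. }
      assert (HS : forall k, St k = (Se k * pow_n (RtoC s) k)%C).
      { intros k. eapply is_msum_unique; [apply H1|]. apply (is_msum_scal r (fun m => Fe m k)). apply HSe. }
      subst Tt. eapply is_series_ext; [|exact H3]. intros k; rewrite HS; auto. }
    rewrite <- Hmatch. eapply is_msum_ext; [|apply is_msum_scal, HSe]. intros m. rewrite Hl. unfold Fe. cbv beta.
    rewrite <- Cmult_assoc, <- RtoC_mult, Rinv_l, Cmult_1_r by auto. reflexivity.
Qed.
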